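(* Let $q_1,\ldots,q_g$ be binary quadratic forms with integer coefficients, let $D\in\mathbb N$, $\mathbf z\in\mathbb Z^2$, and let $d_1,\ldots,d_g$ be positive integers with $\gcd(d_i,D)=1$ for $i=1,\ldots,g$. Then for every $\mathcal R\subset\mathbb R^2$, $$\#(\Lambda_{\mathbf d}\cap\mathcal R\cap\Psi)=\sum_{b\mid\psi(\mathbf d)}\#\bigl(\Lambda^*_{\mathbf c}\cap\mathcal R/b\cap\Psi_b\bigr),$$ where, for each $b$, $\mathbf c=(c_1,\ldots,c_g)$ with $c_i:=d_i/\gcd(d_i,b^2)$.
   Context: $\Lambda_{\mathbf d}:=\{\mathbf x\in\mathbb Z^2:d_i\mid q_i(\mathbf x),\ i=1,\ldots,g\}$; $\Lambda^*_{\mathbf c}:=\{\mathbf x\in\Lambda_{\mathbf c}:\gcd(x_1,x_2,c_1\cdots c_g)=1\}$; $\Psi:=\{\mathbf x\in\mathbb Z^2:\mathbf x\equiv\mathbf z\pmod D\}$; $\Psi_b:=\{\mathbf x\in\mathbb Z^2:b\mathbf x\in\Psi\}$; $\mathcal R/b:=\{\mathbf y/b:\mathbf y\in\mathcal R\}$. The function $\psi$ on $g$-tuples of positive integers is multiplicative (i.e. $\psi(\mathbf d)=\prod_p\psi(p^{v_p(d_1)},\ldots,p^{v_p(d_g)})$) with $\psi(p^{\alpha_1},\ldots,p^{\alpha_g}):=p^{\lceil\max(\alpha_1,\ldots,\alpha_g)/2\rceil}$. *)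

(* Defs.v *)
From HB Require Import structures.
From mathcomp Require Import all_boot all_order all_algebra.
From mathcomp Require Import boolp classical_sets functions cardinality reals ereal.
From mathcomp Require Import counting_measure.
Set Implicit Arguments. Unset Strict Implicit. Unset Printing Implicit Defensive.
Import Order.TTheory GRing.Theory Num.Theory.
Local Open Scope ring_scope.
Local Open Scope classical_set_scope.

(* A binary quadratic form with integer coefficients (a,b,c) represents
   q(x1,x2) = a x1^2 + b x1 x2 + c x2^2. *)
Definition bqf := (int * int * int)%type.

Definition qeval (q : bqf) (x : int * int) : int :=
  q.1.1 * x.1 ^+ 2 + q.1.2 * x.1 * x.2 + q.2 * x.2 ^+ 2.

Definition Lambda (g : nat) (q : 'I_g -> bqf) (d : 'I_g -> nat) : set (int * int) :=
  [set x | forall i : 'I_g, ((d i)%:Z %| qeval (q i) x)%Z].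

Definition Lambda_star (g : nat) (q : 'I_g -> bqf) (c : 'I_g -> nat) : set (int * int) :=
  [set x | Lambda q c x /\ gcdz (gcdz x.1 x.2) (\prod_(i < g) c i)%:Z = 1].

Definition Psi (D : nat) (z : int * int) : set (int * int) :=
  [set x | (x.1 = z.1 %[mod D%:Z])%Z /\ (x.2 = z.2 %[mod D%:Z])%Z].

Definition Psi_b (D : nat) (z : int * int) (b : nat) : set (int * int) :=
  [set x | Psi D z (b%:Z * x.1, b%:Z * x.2)].

Definition in_region (R : realType) (Rg : set (R * R)) : set (int * int) :=
  [set x | Rg (x.1%:~R, x.2%:~R)].

Definition region_div (R : realType) (Rg : set (R * R)) (b : nat) : set (R * R) :=
  [set (y.1 / b%:R, y.2 / b%:R) | y in Rg].

(* psi(d) = prod_p p^(ceil(max_i v_p(d_i) / 2)); the product runs over the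
   primes dividing some d_i (other primes contribute p^0 = 1). *)
Definition psi (g : nat) (d : 'I_g -> nat) : nat :=
  \prod_(p <- primes (\prod_(i < g) d i)) (p ^ uphalf (\max_(i < g) logn p (d i)))%N.

Definition cvec (g : nat) (d : 'I_g -> nat) (b : nat) : 'I_g -> nat :=
  fun i => (d i %/ gcdn (d i) (b ^ 2))%N.

(* Main.v *)
Require Import Defs.
From HB Require Import structures.
From mathcomp Require Import all_boot all_order all_algebra finmap.
From mathcomp Require Import boolp classical_sets functions cardinality reals ereal.
From mathcomp Require Import counting_measure.
From mathcomp Require Import zify ring.
Set Implicit Arguments. Unset Strict Implicit. Unset Printing Implicit Defensive.
Import Order.TTheory GRing.Theory Num.Theory.
Local Open Scope ring_scope.
Local Open Scope classical_set_scope.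


Section Cnt.
Variables (T U : choiceType) (R : realType).

Lemma counting_ge0' (A : set T) : (0 <= @counting _ R A)%E.
Proof. by rewrite /counting; case: ifPn; rewrite ?lee_fin// leey. Qed.

Lemma counting_setU (A B : set T) : A `&` B = set0 ->
  @counting _ R (A `|` B) = (counting A + counting B)%E.
Proof.
move=> AB0.
have [fA|iA] := pselect (finite_set A); last first.
  rewrite /counting asboolF; last by rewrite finite_setU => -[].
  rewrite asboolF // addye //.
  by have := @counting_ge0' B; rewrite /counting; case: ifPn.
have [fB|iB] := pselect (finite_set B); last first.
  rewrite /counting asboolF; last by rewrite finite_setU => -[].
  rewrite (asboolF iB) addey //.
  by rewrite asboolT.
rewrite /counting asboolT; last by rewrite finite_setU.
rewrite asboolT // asboolT // fset_setU //.
have := cardfsUI (fset_set A) (fset_set B).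
rewrite -fset_setI // AB0 fset_set0 cardfs0 addn0 => ->.
by rewrite natrD EFinD.
Qed.

Lemma counting_image (f : T -> U) (g : U -> T) (A : set T) : cancel f g ->
  @counting _ R (f @` A) = counting A.
Proof.
move=> fK.
have Ag : A = g @` (f @` A).
  apply/seteqP; split => [x Ax|x [y [x' Ax' <-] <-]]; last by rewrite fK.
  by exists (f x); [exists x|rewrite fK].
have [fA|iA] := pselect (finite_set A); last first.
  rewrite /counting asboolF ?asboolF //.
  by move=> /(finite_image g); rewrite -Ag.
rewrite /counting asboolT ?asboolT //; last exact: finite_image.
rewrite fset_set_image // card_imfset //; exact: can_inj fK.
Qed.

Lemma counting_bigU (s : seq nat) (F : nat -> set T) (lab : T -> nat) :
  uniq s -> (forall b x, b \in s -> F b x -> lab x = b) ->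
  @counting _ R (\big[setU/set0]_(b <- s) F b) = (\sum_(b <- s) counting (F b))%E.
Proof.
elim: s => [|h s IH] /=.
  by move=> _ _; rewrite !big_nil /counting asboolT // fset_set0 cardfs0.
move=> /andP[hs us] lb.
rewrite !big_cons counting_setU ?IH //.
- by move=> b x bs; apply: lb; rewrite inE bs orbT.
apply/seteqP; split => // x [Fh]; rewrite -bigcup_seq => -[b /= bs Fb].
have := lb h x (mem_head _ _) Fh; have := lb b x; rewrite inE bs orbT => /(_ isT Fb) -> hb.
by move: hs; rewrite -hb bs.
Qed.
End Cnt.
Local Open Scope nat_scope.
Lemma logn_prod_seq (s : seq nat) (f : nat -> nat) q :
  prime q -> uniq s -> all prime s ->
  logn q (\prod_(p <- s) p ^ f p) = if q \in s then f q else 0.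
Proof.
move=> pq; elim: s => [|h s IH] /=; first by rewrite big_nil logn1.
move=> /andP[hs us] /andP[ph ps].
have P0 : 0 < \prod_(p <- s) p ^ f p.
  by rewrite big_seq_cond; apply: prodn_cond_gt0 => i /andP[/(allP ps) pi _]; rewrite expn_gt0 prime_gt0.
have H0 : 0 < h ^ f h by rewrite expn_gt0 prime_gt0.
rewrite big_cons (lognM _ H0 P0) IH // lognX logn_prime // inE.
case: (eqVneq q h) => [->|qh] /=; first by rewrite (negbTE hs) muln1 addn0.
by rewrite muln0.
Qed.

Lemma dvd_log n m : 0 < n -> 0 < m ->
  (forall p, prime p -> logn p n <= logn p m) -> n %| m.
Proof.
move=> n0 m0 H; apply/(dvdn_partP _ n0) => p; rewrite mem_primes => /and3P[pp _ _].
by rewrite p_part pfactor_dvdn // H.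
Qed.

Section Psi.
Variables (g : nat) (d : 'I_g -> nat) (dpos : forall i, 0 < d i).

Lemma prodd_gt0 : 0 < \prod_(i < g) d i.
Proof. by apply: prodn_gt0. Qed.

Lemma psi_gt0 : 0 < psi d.
Proof.
rewrite /psi big_seq_cond; apply: prodn_cond_gt0 => p /andP[].
rewrite mem_primes => /andP[pp _] _.
by rewrite expn_gt0 prime_gt0.
Qed.

Lemma logn_psi q : prime q -> logn q (psi d) = uphalf (\max_(i < g) logn q (d i)).
Proof.
move=> pq; rewrite /psi logn_prod_seq ?primes_uniq //; last first.
  by apply/allP => p; rewrite mem_primes => /andP[].
case: ifP => // qn.
suff -> : \max_(i < g) logn q (d i) = 0 by [].
apply/eqP; rewrite -leqn0; apply/bigmax_leqP => i _; rewrite leqn0; apply/eqP.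
apply: contraFeq qn; rewrite -lt0n logn_gt0 => qd.
rewrite mem_primes pq prodd_gt0 /=.
move: qd; rewrite mem_primes => /and3P[_ _ qd]; apply: dvdn_trans qd _.
by rewrite (bigD1 i) //= dvdn_mulr.
Qed.

Lemma psiP1 i : d i %| psi d ^ 2.
Proof.
apply: dvd_log => //; first by rewrite expn_gt0 psi_gt0.
move=> p pp; rewrite lognX logn_psi //.
have : logn p (d i) <= \max_(j < g) logn p (d j) by apply: (leq_bigmax i).
rewrite uphalfE; move: (\max_(j < g) _) => M; lia.
Qed.

Lemma psiP2 m : 0 < m -> (forall i, d i %| m ^ 2) -> psi d %| m.
Proof.
move=> m0 H; apply: dvd_log => //; first exact: psi_gt0.
move=> p pp; rewrite logn_psi //.
have : \max_(j < g) logn p (d j) <= 2 * logn p m.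
  apply/bigmax_leqP => i _; rewrite -lognX; apply: dvdn_leq_log => //.
  by rewrite expn_gt0 m0.
rewrite uphalfE; move: (\max_(j < g) _) => M; lia.
Qed.
End Psi.
Local Close Scope nat_scope.

Local Open Scope nat_scope.
Lemma gaussc d B m : 0 < d -> d %| B * m -> d %/ gcdn d B %| m.
Proof.
move=> d0 H; have g0 : 0 < gcdn d B by rewrite gcdn_gt0 d0.
have cop : coprime (d %/ gcdn d B) (B %/ gcdn d B).
  have : gcdn (d %/ gcdn d B) (B %/ gcdn d B) * gcdn d B = 1 * gcdn d B.
    by rewrite muln_gcdl !divnK ?dvdn_gcdl ?dvdn_gcdr // mul1n.
  by move/eqP; rewrite eqn_pmul2r //.
rewrite -(Gauss_dvdr _ cop) -(dvdn_pmul2r g0) -mulnA (mulnC m) mulnA.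
by rewrite !divnK ?dvdn_gcdl ?dvdn_gcdr // mulnC.
Qed.

Lemma gaussc_inv d B m : d %/ gcdn d B %| m -> d %| B * m.
Proof.
move=> H; rewrite -(divnK (dvdn_gcdl d B)) mulnC.
by apply: dvdn_mul => //; apply: dvdn_gcdr.
Qed.

Lemma coprime_prod (I : finType) (F : I -> nat) G :
  (forall i, coprime G (F i)) -> coprime G (\prod_(i : I) F i).
Proof.
move=> H; elim/big_ind: _ => //; first exact: coprimen1.
by move=> x y; rewrite coprimeMr => -> ->.
Qed.
Local Close Scope nat_scope.

Section Main.
Variables (R : realType) (g : nat) (q : 'I_g -> bqf) (D : nat) (z : int * int)
  (d : 'I_g -> nat) (dpos : forall i, (0 < d i)%N) (Rg : set (R * R)).

Definition Gc (x : int * int) : nat := gcdn `|x.1| `|x.2|.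
Definition beta (x : int * int) : nat := gcdn (Gc x) (psi d).
Definition fb (b : nat) (y : int * int) : int * int := (b%:Z * y.1, b%:Z * y.2).
Definition gb (b : nat) (x : int * int) : int * int :=
  ((x.1 %/ b%:Z)%Z, (x.2 %/ b%:Z)%Z).
Definition Xs := Lambda q d `&` in_region Rg `&` Psi D z.
Definition Ys b := Lambda_star q (cvec d b) `&` in_region (region_div Rg b)
               `&` Psi_b D z b.

Lemma fbK b : (0 < b)%N -> cancel (fb b) (gb b).
Proof.
move=> b0 [y1 y2]; have bz : b%:Z != 0 by rewrite eqz_nat -lt0n.
by rewrite /fb /gb /= !mulKz.
Qed.

Lemma qeval_fb b qq y : qeval qq (fb b y) = (b%:Z) ^+ 2 * qeval qq y.
Proof. by rewrite /qeval /fb /=; ring. Qed.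

Lemma Gc_fb b y : Gc (fb b y) = (b * Gc y)%N.
Proof. by rewrite /Gc /fb /= !abszM muln_gcdr. Qed.

Lemma dvdz_gauss i b y :
  ((d i)%:Z %| qeval (q i) (fb b y))%Z <-> ((cvec d b i)%:Z %| qeval (q i) y)%Z.
Proof.
rewrite qeval_fb !dvdzE abszM abszX /=; split.
  exact: gaussc.
exact: gaussc_inv.
Qed.

Lemma Ys_gcd b y : Ys b y -> coprime (Gc y) (\prod_(i < g) cvec d b i).
Proof.
move=> [[[_ H] _] _]; move: H; rewrite /gcdz /= => -[H].
by rewrite /coprime /Gc H.
Qed.

Lemma LA x : Xs x -> beta x \in divisors (psi d) /\
  exists y, x = fb (beta x) y /\ Ys (beta x) y.
Proof.
move=> Xx; have psi0 := psi_gt0 d.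
have hb : beta x = gcdn (Gc x) (psi d) by [].
move: (beta x) hb => b hb.
have b0 : (0 < b)%N by rewrite hb gcdn_gt0 psi0 orbT.
have bpsi : (b %| psi d)%N by rewrite hb dvdn_gcdr.
split; first by rewrite -dvdn_divisors.
have bG : (b %| Gc x)%N by rewrite hb dvdn_gcdl.
have b1 : (b%:Z %| x.1)%Z by rewrite dvdzE /=; apply: dvdn_trans bG (dvdn_gcdl _ _).
have b2 : (b%:Z %| x.2)%Z by rewrite dvdzE /=; apply: dvdn_trans bG (dvdn_gcdr _ _).
exists (gb b x).
have ex : x = fb b (gb b x).
  by move: b1 b2; case: x {Xx hb bG} => x1 x2 /= b1 b2; rewrite /fb /gb /= !(mulrC b%:Z) !divzK.
split => //; move: (gb b x) ex => y ex; subst x.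
move: Xx => [[Lx Rx] Px].
split; last exact: Px.
split.
  split; first by move=> i; apply/dvdz_gauss; exact: Lx.
  rewrite /gcdz /=; congr Posz; apply/eqP.
  set k := (psi d %/ b)%N.
  have psik : psi d = (b * k)%N by rewrite mulnC divnK.
  have cop : coprime (Gc y) k.
    move: hb; rewrite Gc_fb psik -muln_gcdr => /esym /eqP.
    by rewrite -{2}(muln1 b) eqn_pmul2l.
  apply: coprime_prod => i.
  have ck : (cvec d b i %| k ^ 2)%N.
    apply: gaussc => //; rewrite -expnMn -psik; exact: psiP1.
  exact: coprime_dvdr ck (coprimeXr 2 cop).
have bR : ((b%:Z)%:~R : R) = b%:R by [].
have bR0 : (b%:R : R) != 0 by rewrite pnatr_eq0 -lt0n.
exists (((b%:Z * y.1)%:~R, (b%:Z * y.2)%:~R)); first exact: Rx.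
by rewrite /= !intrM bR ![b%:R * _]mulrC !mulfK.
Qed.

Lemma LB b y : b \in divisors (psi d) -> Ys b y -> Xs (fb b y) /\ beta (fb b y) = b.
Proof.
move=> bdiv Yy; have psi0 := psi_gt0 d.
have bpsi : (b %| psi d)%N by rewrite dvdn_divisors.
have b0 : (0 < b)%N by apply: dvdn_gt0 bpsi.
set k := (psi d %/ b)%N.
have psik : psi d = (b * k)%N by rewrite mulnC divnK.
have k0 : (0 < k)%N by move: psi0; rewrite psik muln_gt0 => /andP[].
have cy := Ys_gcd Yy.
have ck i : (cvec d b i %| k ^ 2)%N.
  apply: gaussc => //; rewrite -expnMn -psik; exact: psiP1.
have copk : coprime (Gc y) k.
  apply/negPn/negP => ncop.
  have gg0 : (0 < gcdn (Gc y) k)%N by rewrite gcdn_gt0 k0 orbT.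
  have gg1 : (1 < gcdn (Gc y) k)%N by move: ncop; rewrite /coprime; lia.
  set p := pdiv (gcdn (Gc y) k).
  have pp : prime p by apply: pdiv_prime.
  have pG : (p %| Gc y)%N by apply: dvdn_trans (pdiv_dvd _) (dvdn_gcdl _ _).
  have pk : (p %| k)%N by apply: dvdn_trans (pdiv_dvd _) (dvdn_gcdr _ _).
  have pc i : coprime (cvec d b i) p.
    rewrite coprime_sym prime_coprime //; apply/negP => pci.
    have ci : (cvec d b i %| \prod_(j < g) cvec d b j)%N.
      by rewrite (bigD1 i) //= dvdn_mulr.
    have := coprime_dvdl pG (coprime_dvdr pci (coprime_dvdr ci cy)).
    by rewrite prime_coprime // dvdnn.
  set m := (b * (k %/ p))%N.
  have kp0 : (0 < k %/ p)%N by rewrite divn_gt0 ?prime_gt0 // dvdn_leq.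
  have m0 : (0 < m)%N by rewrite muln_gt0 b0 kp0.
  have dm i : (d i %| m ^ 2)%N.
    rewrite /m expnMn; apply: gaussc_inv.
    have cp2 : coprime (cvec d b i) (p ^ 2) by apply: coprimeXr.
    by rewrite -(Gauss_dvdl _ cp2) -expnMn divnK //; apply: ck.
  have := psiP2 dpos m0 dm; rewrite psik /m dvdn_pmul2l // => /(dvdn_leq kp0).
  by have := ltn_Pdiv (prime_gt1 pp) k0; lia.
split; last first.
  by rewrite /beta Gc_fb psik -muln_gcdr (eqP copk) muln1.
move: Yy => [[[Ly _] Ry] Py].
split; last exact: Py.
split; first by move=> i; apply/dvdz_gauss; exact: Ly.
have bR : ((b%:Z)%:~R : R) = b%:R by [].
have bR0 : (b%:R : R) != 0 by rewrite pnatr_eq0 -lt0n.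
case: Ry => -[r1 r2] Hr /= [e1 e2].
rewrite /in_region /fb /= !intrM bR -e1 -e2 ![b%:R * _]mulrC !divfK //.
Qed.

End Main.

Theorem lemma2p2 (R : realType) (g : nat) (q : 'I_g -> bqf) (D : nat)
  (z : int * int) (d : 'I_g -> nat)
  (dpos : forall i, (0 < d i)%N) (dcop : forall i, coprime (d i) D)
  (Rg : set (R * R)) :
  @counting _ R (Lambda q d `&` in_region Rg `&` Psi D z) =
  (\sum_(b <- divisors (psi d))
     @counting _ R (Lambda_star q (cvec d b) `&` in_region (region_div Rg b)
               `&` Psi_b D z b))%E.
Proof.
have XE : Lambda q d `&` in_region Rg `&` Psi D z =
   \big[setU/set0]_(b <- divisors (psi d)) (fb b @` Ys q D z d Rg b).
  rewrite -bigcup_seq; apply/seteqP; split.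
    move=> x Xx; have [bd [y [ex Yy]]] := LA dpos Xx.
    by exists (beta d x) => //; exists y.
  by move=> x [b bs [y Yy <-]]; have [] := LB dpos bs Yy.
rewrite XE (@counting_bigU _ R _ _ (beta d)) ?divisors_uniq //; last first.
  by move=> b x bs [y Yy <-]; have [] := LB dpos bs Yy.
apply: eq_big_seq => b bs.
have b0 : (0 < b)%N by apply: dvdn_gt0 (psi_gt0 d) _; rewrite dvdn_divisors // psi_gt0.
by rewrite (counting_image _ _ (fbK b0)).
Qed.
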